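(* Let $\Omega\subset\mathbb{R}^n$ be an open bounded connected domain, let $\rho_\Omega=\max_{\overline\Omega}d_{\partial\Omega}$, and fix $x_0\in\Omega$ with $d_{\partial\Omega}(x_0)=\rho_\Omega$. Then the function $$v(x)=c_0\left[\rho_\Omega^{4/3}-|x-x_0|^{4/3}\right],\qquad c_0=\frac{3^{4/3}}{4},\quad x\in\Omega,$$ (that is, $v(x)=g(\rho_\Omega-|x-x_0|)$ with $g(t)=c_0[\rho_\Omega^{4/3}-(\rho_\Omega-t)^{4/3}]$) is a viscosity solution of $-\Delta_\infty v=1$ in $\Omega$.
   Context: $d_{\partial\Omega}(x)=\min_{y\in\partial\Omega}|x-y|$. $\Delta_\infty\varphi=\langle D^2\varphi\,\nabla\varphi,\nabla\varphi\rangle$. A function $v\in C^0(\Omega)$ is a viscosity solution of $-\Delta_\infty v=1$ if: whenever $\varphi\in C^2(\Omega)$ and $\varphi-v$ has a local minimum at $y$, then $-\Delta_\infty\varphi(y)\le1$; and whenever $\varphi\in C^2(\Omega)$ and $\varphi-v$ has a local maximum at $y$, then $-\Delta_\infty\varphi(y)\ge1$. *)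

(* Defs.v *)
From HB Require Import structures.
From mathcomp Require Import all_boot all_order all_algebra.
From mathcomp Require Import all_classical all_reals all_analysis.
Set Implicit Arguments. Unset Strict Implicit. Unset Printing Implicit Defensive.
Import Order.TTheory GRing.Theory Num.Theory.
Import numFieldNormedType.Exports.
Local Open Scope classical_set_scope.
Local Open Scope ring_scope.

Section Defs.
Context {R : realType} {n : nat}.
Local Notation V := 'rV[R]_n.

Definition enorm (x : V) : R := Num.sqrt (\sum_(i < n) (x ord0 i) ^+ 2).

Definition ebasis (i : 'I_n) : V := delta_mx 0 i.

Definition partial (i : 'I_n) (f : V -> R) (x : V) : R := 'D_(ebasis i) f x.

Definition bdry (O : set V) : set V := closure O `\` interior O.

Definition dist_bd (O : set V) (x : V) : R :=
  inf [set enorm (x - y) | y in bdry O].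

Definition rho (O : set V) : R := sup [set dist_bd O y | y in closure O].

Definition C2_on (O : set V) (phi : V -> R) : Prop :=
  {within O, continuous phi} /\
  forall i : 'I_n,
    (forall x, O x -> derivable phi x (ebasis i)) /\
    {within O, continuous (partial i phi)} /\
    forall j : 'I_n,
      (forall x, O x -> derivable (partial i phi) x (ebasis j)) /\
      {within O, continuous (partial j (partial i phi))}.

Definition inf_laplacian (phi : V -> R) (y : V) : R :=
  \sum_(i < n) \sum_(j < n)
    partial j (partial i phi) y * partial i phi y * partial j phi y.

Definition visc_solution (O : set V) (v : V -> R) : Prop :=
  {within O, continuous v} /\
  (forall (phi : V -> R) (y : V), O y -> C2_on O phi ->
     (\forall x \near y, phi y - v y <= phi x - v x) ->
     - inf_laplacian phi y <= 1) /\
  (forall (phi : V -> R) (y : V), O y -> C2_on O phi ->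
     (\forall x \near y, phi x - v x <= phi y - v y) ->
     1 <= - inf_laplacian phi y).

End Defs.

(* Main.v *)
Require Import Defs.
From HB Require Import structures.
From mathcomp Require Import all_boot all_order all_algebra.
From mathcomp Require Import all_classical all_reals all_analysis.
From mathcomp Require Import ring lra.
Import Order.TTheory GRing.Theory Num.Theory.
Import numFieldNormedType.Exports.
Local Open Scope classical_set_scope.
Local Open Scope ring_scope.

Set Implicit Arguments. Unset Strict Implicit. Unset Printing Implicit Defensive.
Section OneD.
Context {R : realType}.

Lemma near0_ball (P : R -> Prop) : (\forall h \near (0:R), P h) ->
  exists2 r : R, 0 < r & forall h, `|h| < r -> P h.
Proof.
move/nbhs_ballP => [r r0 Hr]; exists r => // h hr; apply: Hr.
by rewrite /ball /= sub0r normrN.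
Qed.

Lemma first_min (H : R -> R) (d : R) : is_derive (0:R) (1:R) H d ->
  (\forall t \near 0, H 0 <= H t) -> d = 0.
Proof.
move=> [Hd <-] Hmin.
set D := 'D_1 H 0.
have HD : (fun h : R => h^-1 *: (H (h *: 1 + 0) - H 0)) @ 0^' --> D by [].
have key : forall e, 0 < e -> exists2 r : R, 0 < r & forall h, `|h| < r ->
   (h != 0 -> `|D - h^-1 *: (H (h *: 1 + 0) - H 0)| < e) /\ H 0 <= H h.
  move=> e e0; apply: near0_ball.
  have := (cvgrPdist_lt _ _).1 HD e e0 => Hq.
  near=> h; split; [near: h; exact: Hq | near: h; exact: Hmin].
have qE h : h^-1 *: (H (h *: 1 + 0) - H 0) = (H h - H 0) / h.
  by rewrite addr0 /GRing.scale /= mulr1 mulrC.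
case: (ltrgt0P D) => // [D0|D0].
- have [r r0 Hr] := key D D0.
  have hr : `|- (r / 2)| < r by rewrite normrN gtr0_norm; lra.
  have [/(_ _) Hq Hm] := Hr _ hr.
  have h0 : - (r/2) != 0 by rewrite oppr_eq0 gt_eqF ?divr_gt0.
  move: (Hq h0); rewrite qE ltr_norml => /andP[_ H2].
  move: Hm; rewrite -subr_ge0 => Hm.
  have : (H (- (r / 2)) - H 0) / - (r / 2) <= 0.
    by rewrite mulr_ge0_le0 // invr_le0 oppr_le0 ltW // divr_gt0.
  lra.
- have nD : 0 < - D by lra.
  have [r r0 Hr] := key (- D) nD.
  have hr : `|r / 2| < r by rewrite gtr0_norm; lra.
  have [/(_ _) Hq Hm] := Hr _ hr.
  have h0 : (r/2) != 0 by rewrite gt_eqF ?divr_gt0.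
  move: (Hq h0); rewrite qE ltr_norml => /andP[H1 _].
  move: Hm; rewrite -subr_ge0 => Hm.
  have : 0 <= (H (r / 2) - H 0) / (r / 2).
    by rewrite mulr_ge0 // invr_ge0 ltW // divr_gt0.
  lra.
Unshelve. all: by end_near. Qed.

Lemma second_min (H dH : R -> R) (c : R) :
  (\forall t \near 0, H 0 <= H t) ->
  (\forall t \near 0, is_derive t (1:R) H (dH t)) ->
  is_derive (0:R) (1:R) dH c -> 0 <= c.
Proof.
move=> Hmin Hder Hc.
have dH0 : dH 0 = 0.
  by apply: (@first_min H) => //; exact: (nbhs_singleton Hder).
rewrite leNgt; apply/negP => c0.
case: Hc => [Hd Dc].
have HD : (fun h : R => h^-1 *: (dH (h *: 1 + 0) - dH 0)) @ 0^' --> c.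
  by rewrite -Dc.
have nc : 0 < - c by lra.
have [r r0 Hr] : exists2 r : R, 0 < r & forall h, `|h| < r ->
   [/\ (h != 0 -> `|c - h^-1 *: (dH (h *: 1 + 0) - dH 0)| < - c), H 0 <= H h &
     is_derive h 1 H (dH h)].
  apply: near0_ball.
  have := (cvgrPdist_lt _ _).1 HD (- c) nc => Hq.
  near=> h; split; [near: h; exact: Hq | near: h; exact: Hmin| near: h; exact: Hder].
have b0 : 0 < r / 2 by lra.
have Hb : forall x, x \in `[0, r/2] -> `|x| < r.
  by move=> x; rewrite in_itv /= => /andP[x0 xb]; rewrite ger0_norm //; lra.
have HdH (x : R) : `|x| < r -> is_derive x (1:R) H (dH x) by move=> /Hr [].
have [xi xiI Hxi] := @MVT R H dH 0 (r/2) b0 (fun x xI =>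
    HdH x (Hb x (subset_itv_oo_cc xI)))
  (derivable_within_continuous (fun x xI => @ex_derive _ _ _ _ _ _ _ (HdH x (Hb x xI)))).
have xi0 : 0 < xi by move: xiI; rewrite in_itv /= => /andP[].
have [/(_ (lt0r_neq0 xi0)) Hq _ _] := Hr xi (Hb xi (subset_itv_oo_cc xiI)).
move: Hq; rewrite addr0 dH0 subr0 /GRing.scale /= mulr1 ltr_norml => /andP[Hq _].
have [_ Hm _] := Hr (r/2) (Hb (r/2) (ltac:(by rewrite in_itv /= lexx andbT ltW))).
have dn : dH xi < 0.
  have : xi^-1 * dH xi < 0 by lra.
  by rewrite pmulr_rlt0 // invr_gt0.
have : dH xi * (r / 2 - 0) < 0 by rewrite pmulr_llt0 // subr0.
by move: Hm; rewrite -subr_ge0 Hxi leNgt => /negP.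
Unshelve. all: by end_near. Qed.
Lemma is_derive_lin (A B t : R) : is_derive t (1:R) (fun s => A + B * s) B.
Proof.
have H := is_deriveD (is_derive_cst A t (1:R)) (is_deriveZ B (is_derive_id t (1:R))).
have -> : (fun s : R => A + B * s) = (cst A + B \*: id) by [].
by apply: is_derive_eq H _; rewrite add0r [_ *: _]mulr1.
Qed.

Lemma is_derive_quad (A B C t : R) :
  is_derive t (1:R) (fun s => A + B * s + C * s ^+ 2) (B + 2 * C * t).
Proof.
have H := is_deriveD (is_deriveD (is_derive_cst A t (1:R)) (is_deriveZ B (is_derive_id t (1:R))))
   (is_deriveZ C (is_deriveM (is_derive_id t (1:R)) (is_derive_id t (1:R)))).
have -> : (fun s : R => A + B * s + C * s ^+ 2) = (cst A + B \*: id + C \*: (id \* id)).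
  by apply/funext => s /=; rewrite expr2.
apply: is_derive_eq H _.
rewrite /GRing.scale /= !mulr1 add0r; ring.
Qed.

Lemma is_derive_powR_comp (q : R -> R) (t dq p : R) : 0 < q t ->
  is_derive t (1:R) q dq -> is_derive t (1:R) (fun s => q s `^ p) (p * q t `^ (p - 1) * dq).
Proof.
move=> qt Hq.
have Dq : derivable q t 1 := @ex_derive _ _ _ _ _ _ _ Hq.
have Hp : is_derive (q t) (1:R) (@powR R ^~ p) (p * q t `^ (p - 1)) := @is_derive1_powR R p (q t) qt.
have Dp : derivable (@powR R ^~ p) (q t) 1 := @ex_derive _ _ _ _ _ _ _ Hp.
have Dc : derivable ((@powR R ^~ p) \o q) t 1.
  apply/derivable1_diffP; apply: differentiable_comp; exact/derivable1_diffP.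
have -> : (fun s => q s `^ p) = ((@powR R ^~ p) \o q) by [].
split; first exact: Dc.
rewrite -derive1E (derive1_comp Dq Dp) !derive1E.
by rewrite (@derive_val _ _ _ _ _ _ _ Hp) (@derive_val _ _ _ _ _ _ _ Hq).
Qed.

End OneD.

Section Multi.
Context {R : realType} {n : nat}.
Local Notation V := 'rV[R]_n.

Lemma line_is_derive (f : V -> R) (c u : V) (s : R) :
  derivable f (c + s *: u) u ->
  is_derive s (1:R) (fun t => f (c + t *: u)) ('D_u f (c + s *: u)).
Proof.
move=> Hd.
have E : (fun h : R => h^-1 *: ((fun t => f (c + t *: u)) (h *: 1 + s) -
            (fun t => f (c + t *: u)) s)) =
         (fun h => h^-1 *: (f (h *: u + (c + s *: u)) - f (c + s *: u))).
  apply/funext => h /=; congr (_ *: (f _ - _)).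
  have -> : h *: (1:R) = h by rewrite /GRing.scale /= mulr1.
  by rewrite scalerDl addrCA.
split; first by rewrite /derivable E.
by rewrite /derive E.
Qed.

Lemma lip0 (g dg : R -> R) (b M : R) :
  (forall s, `|s| <= `|b| -> is_derive s (1:R) g (dg s) /\ `|dg s| <= M) ->
  `|g b - g 0| <= M * `|b|.
Proof.
move=> H.
have cont : forall a c : R, (forall s, s \in `[a, c] -> `|s| <= `|b|) ->
    {within `[a, c], continuous g}.
  move=> a c Hs; apply: derivable_within_continuous => s /Hs /H [Hd _].
  exact: ex_derive.
case: (leP 0 b) => b0.
  have Hs : forall s, s \in `[0, b] -> `|s| <= `|b|.
    by move=> s; rewrite in_itv /= => /andP[s0 sb]; rewrite !ger0_norm //; lra.
  have [c cI ->] := @MVT_segment R g dg 0 b b0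
    (fun x xI => (H x (Hs x (subset_itv_oo_cc xI))).1) (cont _ _ Hs).
  rewrite normrM subr0 ler_wpM2r //.
  exact: (H c (Hs c cI)).2.
have Hs : forall s, s \in `[b, 0] -> `|s| <= `|b|.
  by move=> s; rewrite in_itv /= => /andP[s0 sb]; rewrite !ler0_norm //; lra.
have [c cI E] := @MVT_segment R g dg b 0 (ltW b0)
    (fun x xI => (H x (Hs x (subset_itv_oo_cc xI))).1) (cont _ _ Hs).
rewrite distrC E normrM sub0r normrN ler_wpM2r //.
exact: (H c (Hs c cI)).2.
Qed.

Definition Pk (w : V) (k : nat) : V := \row_j (if (j < k)%N then w ord0 j else 0).

Lemma Pk0 (w : V) : Pk w 0 = 0.
Proof. by apply/rowP => j; rewrite !mxE. Qed.

Lemma Pkn (w : V) : Pk w n = w.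
Proof. by apply/rowP => j; rewrite !mxE ltn_ord. Qed.

Lemma PkS (w : V) (k : 'I_n) : Pk w k.+1 = Pk w k + w ord0 k *: ebasis k.
Proof.
apply/rowP => j; rewrite /ebasis !mxE eqxx /= ltnS leq_eqVlt.
case: (eqVneq j k) => [->|jk] /=; first by rewrite ltnn eqxx mulr1 add0r.
have jk' : (nat_of_ord j == nat_of_ord k) = false.
  by apply/negbTE; move: jk; apply: contra => /eqP/val_inj ->.
by rewrite ?jk' ?(negbTE jk) /= mulr0 addr0.
Qed.

Lemma norm_entry (x : V) (j : 'I_n) : `|x ord0 j| <= `|x|.
Proof.
rewrite [leRHS]/Num.Def.normr /= mx_normrE.
by apply: le_trans (le_bigmax _ _ (ord0, j)) => /=.
Qed.

Lemma norm_le_entries (x : V) (c : R) : 0 <= c ->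
  (forall j, `|x ord0 j| <= c) -> `|x| <= c.
Proof.
move=> c0 H; rewrite [leLHS]/Num.Def.normr /= mx_normrE.
apply: bigmax_le => //= -[i j] _.
by rewrite (ord1 i); exact: H.
Qed.

Lemma dir_partials (f : V -> R) (z w : V) :
  (\forall x \near z, forall j, derivable f x (ebasis j)) ->
  (forall j, {for z, continuous (partial j f)}) ->
  is_derive z w f (\sum_j w ord0 j * partial j f z).
Proof.
move=> Hder Hcont.
set L := \sum_j _.
suff HL : (fun h : R => h^-1 *: (f (h *: w + z) - f z)) @ 0^' --> L.
  by split; [apply/cvg_ex; exists L | exact: cvg_lim HL].
apply/cvgrPdist_le => e e0.
set S := \sum_j `|w ord0 j|.
have S0 : 0 <= S by apply: sumr_ge0 => j _.
set E := e / (S + 1).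
have E0 : 0 < E by apply: divr_gt0 => //; lra.
have HE : E * S <= e.
  rewrite /E mulrAC ler_pdivrMr; last lra.
  by rewrite ler_pM2l //; lra.
have Hnear : \forall x \near z, (forall j, derivable f x (ebasis j)) /\
    (forall j, `|partial j f z - partial j f x| <= E).
  near=> x; split; first by near: x.
  near: x; apply: filter_forall => j.
  exact: ((cvgrPdist_le _ _).1 (Hcont j) E E0).
have [d d0 Hd] := (nbhs_ballP _ _).1 Hnear.
set W := `|w|.
have W0 : 0 <= W by exact: normr_ge0.
near=> h.
have hlt : `|h| < d / (W + 1).
  by near: h; apply: dnbhs0_lt; apply: divr_gt0 => //; lra.
have h0 : h != 0 by near: h; exact: nbhs_dnbhs_neq.
have hW : `|h| * W < d.
  move: hlt; rewrite ltr_pdivlMr; last lra.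
  by apply: le_lt_trans; rewrite ler_wpM2l //; lra.
have Hball : forall (k : 'I_n) s, `|s| <= `|h * w ord0 k| ->
    ball z d (z + h *: Pk w k + s *: ebasis k).
  move=> k s hs; rewrite -ball_normE /ball_ /=.
  rewrite -addrA opprD addrA subrr add0r normrN.
  apply: le_lt_trans hW; apply: norm_le_entries => [|j].
    by apply: mulr_ge0.
  rewrite /ebasis /Pk !mxE eqxx /=.
  case: (eqVneq j k) => [->|jk].
    rewrite ltnn mulr0 add0r mulr1.
    by apply: le_trans hs _; rewrite normrM ler_wpM2l // norm_entry.
  have jk' : (nat_of_ord j == nat_of_ord k) = false.
    by apply/negbTE; move: jk; apply: contra => /eqP/val_inj ->.
  rewrite ?jk' ?(negbTE jk) /= mulr0 addr0.
  case: ifP => _; last by rewrite mulr0 normr0; apply: mulr_ge0.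
  by rewrite normrM ler_wpM2l // norm_entry.
have Hterm : forall k : 'I_n,
    `|(f (z + h *: Pk w k.+1) - f (z + h *: Pk w k)) - h * w ord0 k * partial k f z|
      <= E * (`|h| * `|w ord0 k|).
  move=> k; set c := z + h *: Pk w k.
  have -> : z + h *: Pk w k.+1 = c + (h * w ord0 k) *: ebasis k.
    by rewrite PkS scalerDr scalerA addrA.
  have := @lip0 (fun s => f (c + s *: ebasis k) - partial k f z * s)
    (fun s => partial k f (c + s *: ebasis k) - partial k f z) (h * w ord0 k) E.
  rewrite scale0r addr0 mulr0 subr0 normrM -mulrA [partial k f z * _]mulrC mulrA.
  move=> Hl; rewrite addrAC; apply: Hl => s hs.
  have /Hd [Hdj Hcj] := Hball k s (ltac:(by rewrite normrM)).
  split; last by rewrite distrC; exact: Hcj.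
  have h1 := line_is_derive (Hdj k).
  have h2 : is_derive s (1:R) (fun s : R => partial k f z * s) (partial k f z).
    have -> : (fun s : R => partial k f z * s) = (partial k f z \*: id) by [].
    have HH := (is_deriveZ (partial k f z) (is_derive_id (s:R) (1:R))).
    by apply: is_derive_eq HH _; rewrite [_%:A]mulr1.
  exact: (is_deriveB h1 h2).
have Htel : f (h *: w + z) - f z =
    \sum_(k < n) (f (z + h *: Pk w k.+1) - f (z + h *: Pk w k)).
  rewrite -(big_mkord xpredT (fun k => f (z + h *: Pk w k.+1) - f (z + h *: Pk w k))).
  rewrite (@telescope_sumr _ 0 n (fun k => f (z + h *: Pk w k))) //.
  by rewrite Pkn Pk0 scaler0 addr0 [z + _]addrC.
have Hsum : `|f (h *: w + z) - f z - h * L| <= E * (`|h| * S).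
  rewrite Htel /L mulr_sumr -sumrB.
  apply: le_trans (ler_norm_sum _ _ _) _.
  rewrite /S !mulr_sumr; apply: ler_sum => k _.
  by rewrite mulrA (Hterm k).
have -> : L - h^-1 *: (f (h *: w + z) - f z) =
    h^-1 * (h * L - (f (h *: w + z) - f z)).
  by rewrite mulrBr mulrA mulVf // mul1r.
rewrite normrM normfV distrC.
rewrite ler_pdivrMl ?normr_gt0 //.
apply: le_trans Hsum _.
by rewrite mulrCA ler_wpM2l.
Unshelve. all: by end_near.
Qed.

Lemma near_line (P : V -> Prop) (y w : V) :
  (\forall x \near y, P x) -> \forall t \near (0:R), P (y + t *: w).
Proof.
move/nbhs_ballP => [d d0 Hd]; apply/nbhs_ballP.
have W0 : 0 <= `|w| by exact: normr_ge0.
exists (d / (`|w| + 1)); first by apply: divr_gt0 => //; lra.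
move=> t; rewrite -ball_normE /ball_ /= sub0r normrN => ht; apply: Hd.
rewrite -ball_normE /ball_ /= opprD addrA subrr add0r normrN normrZ.
move: ht; rewrite ltr_pdivlMr; last lra.
by apply: le_lt_trans; rewrite ler_wpM2l //; lra.
Qed.

Lemma open_near (O : set V) (y : V) : open O -> O y -> \forall x \near y, O x.
Proof. by rewrite openE => oO Oy; exact: oO. Qed.

Lemma C2_cont (O : set V) (g : V -> R) (z : V) : open O -> O z ->
  {within O, continuous g} -> {for z, continuous g}.
Proof.
move=> oO Oz; rewrite continuous_open_subspace // => Hc.
by apply: Hc; rewrite inE.
Qed.

Lemma C2_line_d1 (O : set V) (phi : V -> R) (y w : V) : open O -> O y ->
  C2_on O phi ->
  \forall t \near (0:R), is_derive t (1:R) (fun t => phi (y + t *: w))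
      (\sum_j w ord0 j * partial j phi (y + t *: w)).
Proof.
move=> oO Oy [_ HC].
have := near_line w (open_near oO Oy).
apply: filterS => t Ot.
set z := y + t *: w.
have Hz : is_derive z w phi (\sum_j w ord0 j * partial j phi z).
  apply: dir_partials.
    by apply: filterS (open_near oO Ot) => x Ox j; exact: ((HC j).1 x Ox).
  by move=> j; apply: (C2_cont oO Ot); exact: (HC j).2.1.
have H1 := @line_is_derive phi y w t (@ex_derive _ _ _ _ _ _ _ Hz).
apply: is_derive_eq H1 _; exact: (@derive_val _ _ _ _ _ _ _ Hz).
Qed.


Lemma C2_line_d2 (O : set V) (phi : V -> R) (y w : V) : open O -> O y ->
  C2_on O phi ->
  is_derive (0:R) (1:R) (fun t => \sum_j w ord0 j * partial j phi (y + t *: w))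
     (\sum_j w ord0 j * \sum_i w ord0 i * partial i (partial j phi) y).
Proof.
move=> oO Oy [_ HC].
have -> : (fun t : R => \sum_j w ord0 j * partial j phi (y + t *: w)) =
   \sum_j (fun t : R => w ord0 j * partial j phi (y + t *: w)) by rewrite fct_sumE.
apply: is_derive_sum => j.
have Hz : is_derive y w (partial j phi)
    (\sum_i w ord0 i * partial i (partial j phi) y).
  apply: dir_partials.
    by apply: filterS (open_near oO Oy) => x Ox i; exact: ((HC j).2.2 i).1 x Ox.
  by move=> i; apply: (C2_cont oO Oy); exact: ((HC j).2.2 i).2.
have H1 := @line_is_derive (partial j phi) y w 0.
rewrite scale0r addr0 in H1.
have H2 := H1 (@ex_derive _ _ _ _ _ _ _ Hz).
rewrite (@derive_val _ _ _ _ _ _ _ Hz) in H2.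
exact: (is_deriveZ (w ord0 j) H2).
Qed.

End Multi.


Section Alg.
Context {R : realType}.

Lemma pow_facts (A : R) : 0 < A ->
  let s := A `^ (3^-1) in
  [/\ 0 < s, A = s ^+ 3, A `^ (2/3 - 1) = s^-1 & A `^ (2/3 - 1 - 1) = (s ^+ 4)^-1].
Proof.
move=> A0 s.
have s0 : 0 < s by apply: powR_gt0.
have e3 : forall k : nat, A `^ (3^-1 * k%:R) = s ^+ k.
  by move=> k; rewrite powRrM powR_mulrn // ltW.
split => //.
- by rewrite -e3 mulVf ?pnatr_eq0 // powRr1 // ltW.
- have -> : (2/3 - 1 : R) = - (3^-1 * 1%:R) by field.
  by rewrite powRN e3 expr1.
- have -> : (2/3 - 1 - 1 : R) = - (3^-1 * 4%:R) by field.
  by rewrite powRN e3.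
Qed.

End Alg.

Section Gl.
Context {R : realType} {n : nat}.
Local Notation V := 'rV[R]_n.

Definition qf (A B C t : R) := A + (2 * B) * t + C * t ^+ 2.
Definition dGf (A B C t : R) := (2/3) * qf A B C t `^ (2/3 - 1) * (2 * B + 2 * C * t).

Definition sA (a : V) := \sum_i a ord0 i ^+ 2.
Definition sB (a w : V) := \sum_i a ord0 i * w ord0 i.

Lemma enorm_line (a w : V) (t : R) :
  enorm (a + t *: w) `^ (4/3) = qf (sA a) (sB a w) (sA w) t `^ (2/3).
Proof.
have E : \sum_i ((a + t *: w) ord0 i) ^+ 2 = qf (sA a) (sB a w) (sA w) t.
  rewrite /qf /sA /sB.
  have H : forall i : 'I_n, ((a + t *: w) ord0 i) ^+ 2 =
      a ord0 i ^+ 2 + (2 * t) * (a ord0 i * w ord0 i) + t ^+ 2 * (w ord0 i ^+ 2).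
    by move=> i; rewrite !mxE; ring.
  rewrite (eq_bigr _ (fun i _ => H i)) !big_split /= -!mulr_sumr; ring.
have E0 : 0 <= \sum_i ((a + t *: w) ord0 i) ^+ 2 by apply: sumr_ge0 => i _; exact: sqr_ge0.
rewrite /enorm -powR12_sqrt // -powRrM E.
by congr (_ `^ _); field.
Qed.

Lemma sA_ge0 (a : V) : 0 <= sA a.
Proof. by apply: sumr_ge0 => i _; exact: sqr_ge0. Qed.

Lemma qf_near (A B C : R) : 0 < A -> 0 <= C -> \forall t \near (0:R), 0 < qf A B C t.
Proof.
move=> A0 C0; apply/nbhs_ballP.
have B0 : 0 <= `|B| by exact: normr_ge0.
exists (A / (2 * `|B| + 1)); first by apply: divr_gt0 => //; lra.
move=> t; rewrite -ball_normE /ball_ /= sub0r normrN => ht.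
move: ht; rewrite ltr_pdivlMr; last lra.
move=> ht.
have h1 := ler_norm (- (B * t)); rewrite normrN normrM in h1.
have h2 : 0 <= C * t ^+ 2 by apply: mulr_ge0 => //; exact: sqr_ge0.
have h3 : 0 <= `|t| by exact: normr_ge0.
rewrite /qf; nra.
Qed.

Lemma Gl_d1 (a w : V) : 0 < sA a ->
  \forall t \near (0:R), is_derive t (1:R) (fun t => enorm (a + t *: w) `^ (4/3))
     (dGf (sA a) (sB a w) (sA w) t).
Proof.
move=> A0; have := qf_near (sB a w) A0 (sA_ge0 w).
apply: filterS => t qt.
have -> : (fun t => enorm (a + t *: w) `^ (4/3)) =
          (fun t => qf (sA a) (sB a w) (sA w) t `^ (2/3)).
  by apply/funext => s; rewrite enorm_line.
exact: (is_derive_powR_comp _ qt (is_derive_quad _ _ _ _)).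
Qed.

Lemma Gl_d2 (A B C : R) : 0 < A -> 0 <= C ->
  is_derive (0:R) (1:R) (dGf A B C)
   ((2/3) * qf A B C 0 `^ (2/3 - 1) * (2 * C) +
    (2 * B + 2 * C * 0) * ((2/3) * ((2/3 - 1) * qf A B C 0 `^ (2/3 - 1 - 1) * (2 * B + 2 * C * 0)))).
Proof.
move=> A0 C0.
have q0 : 0 < qf A B C 0 by rewrite /qf mulr0 expr0n /= mulr0 !addr0.
have HF := is_deriveZ (2/3) (is_derive_powR_comp (2/3 - 1) q0 (is_derive_quad A (2 * B) C 0)).
have HG := is_derive_lin (2 * B) (2 * C) 0.
have H := is_deriveM HF HG.
have -> : dGf A B C = ((2/3) \*: (fun s => qf A B C s `^ (2/3 - 1))) * (fun s => 2 * B + 2 * C * s).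
  by apply/funext => s.
apply: is_derive_eq H _.
by rewrite /GRing.scale /=.
Qed.

End Gl.

Section Pow.
Context {R : realType}.

Lemma abs43E (t : R) : `|t| `^ (4/3) = `|t| * `|t| `^ (3^-1).
Proof.
rewrite -mulr_powRB1 //.
by congr (_ * _ `^ _); field.
Qed.

Lemma abs_cube (t : R) : `|t| = (`|t| `^ (3^-1)) ^+ 3.
Proof.
rewrite -powR_mulrn ?powR_ge0 // -powRrM mulVf ?pnatr_eq0 // powRr1 //.
Qed.

Lemma small_pow (e : R) : 0 < e -> \forall t \near (0:R), `|t| `^ (3^-1) <= e.
Proof.
move=> e0; apply/nbhs_ballP; exists (e ^+ 3); first exact: exprn_gt0.
move=> t; rewrite -ball_normE /ball_ /= sub0r normrN => ht.
have -> : e = (e ^+ 3) `^ (3^-1).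
  by rewrite -powR_mulrn ?ltW // -powRrM mulfV ?pnatr_eq0 // powRr1 // ltW.
apply: ge0_ler_powR; rewrite ?invr_ge0 ?ler0n ?nnegrE ?normr_ge0 ?ltW //.
exact: exprn_gt0.
Qed.

Lemma abs43_derive : is_derive (0:R) (1:R) (fun t => `|t| `^ (4/3)) 0.
Proof.
have Hc : (fun h : R => h^-1 *: ((fun t : R => `|t| `^ (4/3)) (h *: (1:R) + 0) - (fun t : R => `|t| `^ (4/3)) 0))
    @ 0^' --> (0:R).
  apply/cvgrPdist_le => e e0.
  have := small_pow e0 => Hs.
  near=> h.
  have h0 : h != 0 by near: h; exact: nbhs_dnbhs_neq.
  rewrite normr0 powR0; last by apply/eqP; lra.
  rewrite subr0 addr0 /GRing.scale /= mulr1 sub0r normrN abs43E mulrA normrM.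
  rewrite normrM normfV normr_id mulVf ?normr_eq0 // mul1r norm_powR ?normr_ge0 // normr_id.
  by near: h; apply: cvg_within.
split; first by apply/cvg_ex; exists 0.
exact: cvg_lim Hc.
Unshelve. all: by end_near.
Qed.

Lemma abs43_ge (K c : R) : 0 < K -> 0 < c ->
  \forall t \near (0:R), K * t ^+ 2 <= c * `|t| `^ (4/3).
Proof.
move=> K0 c0.
have H1 := small_pow (ltr01 : (0:R) < 1).
have H2 := small_pow (divr_gt0 c0 K0).
near=> t.
have u1 : `|t| `^ (3^-1) <= 1 by near: t; exact: H1.
have u2 : `|t| `^ (3^-1) <= c / K by near: t; exact: H2.
set u := `|t| `^ (3^-1).
have u0 : 0 <= u by exact: powR_ge0.
have e1 : t ^+ 2 = u ^+ 2 * u ^+ 4.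
  by rewrite -real_normK ?num_real // abs_cube -exprM -exprD.
have e2 : `|t| `^ (4/3) = u ^+ 4 by rewrite abs43E {1}abs_cube -exprSr.
rewrite e1 e2 mulrA.
have Ku : K * u <= c by move: u2; rewrite ler_pdivlMr // mulrC.
have Ku2 : K * u ^+ 2 <= c.
  have h : 0 <= (K * u) * (1 - u).
    by apply: mulr_ge0; [exact: mulr_ge0 (ltW K0) u0 | rewrite subr_ge0].
  move: h Ku; rewrite expr2 mulrBr mulr1 mulrA; move: (K * u * u) (K * u) => p q.
  lra.
by rewrite ler_wpM2r // exprn_ge0.
Unshelve. all: by end_near.
Qed.

Lemma powabs_cont (p u : R) : 0 < p -> {for u, continuous (fun v : R => `|v| `^ p)}.
Proof.
move=> p0.
have [u0|u0] := eqVneq u 0.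
  rewrite u0; apply/cvgrPdist_le => e e0.
  rewrite normr0 powR0 ?gt_eqF //.
  exists (e `^ (p^-1)); first exact: powR_gt0.
  move=> v; rewrite /ball_ /= sub0r normrN => hv.
  rewrite sub0r normrN norm_powR ?normr_ge0 // normr_id.
  have -> : e = (e `^ (p^-1)) `^ p by rewrite -powRrM mulVf ?gt_eqF // powRr1 // ltW.
  apply: ge0_ler_powR; rewrite ?nnegrE ?normr_ge0 ?powR_ge0 ?ltW //.
have nu : 0 < `|u| by rewrite normr_gt0.
have Hp := @is_derive1_powR R p `|u| nu.
have Dp : derivable (@powR R ^~ p) `|u| 1 := @ex_derive _ _ _ _ _ _ _ Hp.
have Cp : {for `|u|, continuous (@powR R ^~ p)}.
  by apply: differentiable_continuous; exact/derivable1_diffP.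
exact: (continuous_comp (@norm_continuous _ R^o u) Cp).
Qed.

End Pow.


Section Gen1.
Context {R : realType}.

Lemma first_min_s (sg : R) (H : R -> R) (d : R) : sg != 0 ->
  is_derive (0:R) (1:R) H d -> (\forall t \near 0, sg * H 0 <= sg * H t) -> d = 0.
Proof.
move=> sg0 Hd Hm.
have := @first_min R (sg \*: H) (sg *: d) (is_deriveZ sg Hd) Hm.
by move/eqP; rewrite scaler_eq0 (negbTE sg0) /= => /eqP.
Qed.

Lemma second_min_s (sg : R) (H dH : R -> R) (c : R) :
  (\forall t \near 0, sg * H 0 <= sg * H t) ->
  (\forall t \near 0, is_derive t (1:R) H (dH t)) ->
  is_derive (0:R) (1:R) dH c -> 0 <= sg * c.
Proof.
move=> Hm Hd Hc.
apply: (@second_min R (sg \*: H) (sg \*: dH) (sg *: c) Hm) (is_deriveZ sg Hc).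
by apply: filterS Hd => t Ht; exact: is_deriveZ.
Qed.

Lemma is_derive_aff (G : R -> R) (c K t d : R) : is_derive t (1:R) G d ->
  is_derive t (1:R) (fun s => c * (K - G s)) (- (c * d)).
Proof.
move=> HG.
have H := is_deriveZ c (is_deriveB (is_derive_cst K t (1:R)) HG).
have -> : (fun s => c * (K - G s)) = c \*: (cst K - G) by [].
by apply: is_derive_eq H _; rewrite sub0r /GRing.scale /= mulrN.
Qed.

Lemma is_derive_negc (D : R -> R) (c t d : R) : is_derive t (1:R) D d ->
  is_derive t (1:R) (fun s => - (c * D s)) (- (c * d)).
Proof.
move=> HD.
have H := is_deriveN (is_deriveZ c HD).
by [].
Qed.

End Gen1.

Section Gen2.
Context {R : realType} {n : nat}.
Local Notation V := 'rV[R]_n.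

Definition vf (c0 K : R) (x0 : V) (x : V) : R := c0 * (K - enorm (x - x0) `^ (4/3)).

Lemma vf_line (c0 K : R) (x0 y w : V) (t : R) :
  vf c0 K x0 (y + t *: w) = c0 * (K - enorm ((y - x0) + t *: w) `^ (4/3)).
Proof. by rewrite /vf addrAC. Qed.

Lemma sA_gt0 (a : V) : a != 0 -> 0 < sA a.
Proof.
move=> a0; rewrite lt_def sA_ge0 andbT.
apply: contra a0 => /eqP H; apply/eqP/rowP => i; rewrite mxE.
have := (psumr_eq0P (fun j _ => sqr_ge0 (a ord0 j)) H) i isT.
by move/eqP; rewrite sqrf_eq0 => /eqP.
Qed.

Lemma sB_e (a : V) (i : 'I_n) : sB a (ebasis i) = a ord0 i.
Proof.
rewrite /sB (bigD1 i) //= big1 => [|j ji].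
  by rewrite /ebasis mxE !eqxx mulr1 addr0.
by rewrite /ebasis mxE eqxx (negbTE ji) mulr0.
Qed.

Lemma sA_e (i : 'I_n) : sA (ebasis i : V) = 1.
Proof.
rewrite /sA (bigD1 i) //= big1 => [|j ji].
  by rewrite /ebasis mxE !eqxx expr1n addr0.
by rewrite /ebasis mxE eqxx (negbTE ji) expr0n.
Qed.

Lemma sB_scale (a : V) (k : R) : sB a (k *: a) = k * sA a.
Proof.
rewrite /sB /sA mulr_sumr; apply: eq_bigr => i _; rewrite mxE; ring.
Qed.

Lemma sA_scale (a : V) (k : R) : sA (k *: a) = k ^+ 2 * sA a.
Proof.
rewrite /sA mulr_sumr; apply: eq_bigr => i _; rewrite mxE; ring.
Qed.

Lemma qf0 (A B C : R) : qf A B C 0 = A.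
Proof. by rewrite /qf mulr0 expr0n /= mulr0 !addr0. Qed.

Lemma enorm_e (t : R) (i : 'I_n) : enorm (t *: (ebasis i : V)) = `|t|.
Proof.
rewrite /enorm (bigD1 i) //= big1 => [|j ji].
  by rewrite addr0 /ebasis !mxE !eqxx mulr1 sqrtr_sqr.
by rewrite /ebasis !mxE eqxx (negbTE ji) mulr0 expr0n.
Qed.

Lemma enorm43 (z : V) : enorm z `^ (4/3) = `|sA z| `^ (2/3).
Proof.
rewrite /enorm -powR12_sqrt; last exact: sA_ge0.
rewrite -powRrM ger0_norm; last exact: sA_ge0.
by congr (_ `^ _); rewrite /sA; field.
Qed.

End Gen2.


Section Main.
Context {R : realType} {n : nat}.
Local Notation V := 'rV[R]_n.

Lemma cont_sA (x0 : V) : continuous (fun x : V => sA (x - x0)).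
Proof.
have -> : (fun x : V => sA (x - x0)) = \sum_i (fun x : V => ((x - x0) ord0 i) ^+ 2).
  by rewrite fct_sumE.
move=> x; elim/big_ind : _ => [| f g Hf Hg | i _].
- exact: cst_continuous.
- exact: continuousD.
- have Hc : {for x, continuous (fun x : V => (x - x0) ord0 i)}.
    have -> : (fun x : V => (x - x0) ord0 i) = (fun x : V => x ord0 i - x0 ord0 i).
      by apply/funext => z; rewrite !mxE.
    apply: continuousB; first exact: coord_continuous.
    exact: cst_continuous.
  have -> : (fun x : V => ((x - x0) ord0 i) ^+ 2) =
     (fun x : V => (x - x0) ord0 i) \* (fun x : V => (x - x0) ord0 i).
    by apply/funext => z; rewrite expr2.
  exact: continuousM.
Qed.

Lemma vf_cont (c0 K : R) (x0 : V) : continuous (vf c0 K x0).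
Proof.
move=> x.
have -> : vf c0 K x0 = (fun x => c0 * (K - `|sA (x - x0)| `^ (2/3))).
  by apply/funext => z; rewrite /vf enorm43.
have Hp : {for x, continuous ((fun v : R => `|v| `^ (2/3)) \o (fun x : V => sA (x - x0)))}.
  apply: continuous_comp; first exact: cont_sA.
  by apply: powabs_cont; lra.
have -> : (fun x => c0 * (K - `|sA (x - x0)| `^ (2/3))) =
  (cst c0) \* (cst K - ((fun v : R => `|v| `^ (2/3)) \o (fun x : V => sA (x - x0)))) by [].
apply: continuousM; first exact: cst_continuous.
apply: continuousB; first exact: cst_continuous.
exact: Hp.
Qed.

Lemma lap_eq (phi : V -> R) (y : V) :
  \sum_j (\row_i partial i phi y : V) ord0 j *
     \sum_i (\row_i partial i phi y : V) ord0 i * partial i (partial j phi) y =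
  inf_laplacian phi y.
Proof.
rewrite /inf_laplacian; apply: eq_bigr => j _; rewrite mulr_sumr.
by apply: eq_bigr => i _; rewrite !mxE; ring.
Qed.

Lemma case_ne (O : set V) (phi : V -> R) (x0 y : V) (c0 K sg : R) :
  open O -> O y -> C2_on O phi -> y != x0 -> sg != 0 -> 0 < c0 -> c0 ^+ 3 = 81/64 ->
  (\forall x \near y, sg * (phi y - vf c0 K x0 y) <= sg * (phi x - vf c0 K x0 x)) ->
  0 <= sg * (inf_laplacian phi y + 1).
Proof.
move=> oO Oy HC yx0 sg0 c00 c03 Hm.
have A0 : 0 < sA (y - x0) by apply: sA_gt0; rewrite subr_eq0.
have [s0 As sE1 sE4] := pow_facts A0.
move: s0 As sE1 sE4.
set a := y - x0.
set A := sA a.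
set s := A `^ 3^-1.
move=> s0 As sE1 sE4.
have Hl : forall w : V, \forall t \near (0:R),
    sg * ((fun t : R => phi (y + t *: w) - vf c0 K x0 (y + t *: w)) 0) <=
    sg * ((fun t : R => phi (y + t *: w) - vf c0 K x0 (y + t *: w)) t).
  by move=> w; have := near_line w Hm; apply: filterS => t /=; rewrite scale0r addr0.
have Vd1 : forall w : V, \forall t \near (0:R), is_derive t (1:R)
    (fun t => vf c0 K x0 (y + t *: w)) (- (c0 * dGf A (sB a w) (sA w) t)).
  move=> w; have := Gl_d1 w A0; apply: filterS => t Ht.
  have -> : (fun t => vf c0 K x0 (y + t *: w)) =
      (fun t => c0 * (K - enorm (a + t *: w) `^ (4/3))).
    by apply/funext => u; rewrite vf_line.
  exact: is_derive_aff.
have Hg : forall i, partial i phi y = - (4/3) * c0 / s * a ord0 i.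
  move=> i.
  have Hphi : is_derive (0:R) (1:R) (fun t => phi (y + t *: ebasis i)) (partial i phi y).
    have := @line_is_derive R n phi y (ebasis i) 0; rewrite scale0r addr0; apply.
    exact: (HC.2 i).1 y Oy.
  have Hv := nbhs_singleton (Vd1 (ebasis i)).
  have := first_min_s sg0 (is_deriveB Hphi Hv) (Hl (ebasis i)).
  rewrite /dGf qf0 sE1 sB_e mulr0 addr0 opprK => /eqP; rewrite addr_eq0 => /eqP ->.
  by field; rewrite gt_eqF.
set g : V := \row_i partial i phi y.
set k := - (4/3) * c0 / s.
have gE : g = k *: a.
  apply/rowP => i. rewrite /g /k !mxE Hg /a !mxE //.
have Fd1 := C2_line_d1 g oO Oy HC.
have Fd2 := C2_line_d2 g oO Oy HC.
have Vd2 := is_derive_negc c0 (Gl_d2 (sB a g) A0 (sA_ge0 g)).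
have Hd : \forall t \near (0:R), is_derive t (1:R)
    (fun t : R => phi (y + t *: g) - vf c0 K x0 (y + t *: g))
    ((\sum_j g ord0 j * partial j phi (y + t *: g)) - (- (c0 * dGf A (sB a g) (sA g) t))).
  near=> t; apply: is_deriveB; [near: t; exact: Fd1 | near: t; exact: (Vd1 g)].
have := second_min_s (Hl g) Hd (is_deriveB Fd2 Vd2).
rewrite lap_eq opprK.
suff -> : c0 * ((2/3) * qf A (sB a g) (sA g) 0 `^ (2/3 - 1) * (2 * sA g) +
    (2 * sB a g + 2 * sA g * 0) * ((2/3) * ((2/3 - 1) * qf A (sB a g) (sA g) 0 `^ (2/3 - 1 - 1) *
    (2 * sB a g + 2 * sA g * 0)))) = 1 by [].
rewrite qf0 sE1 sE4 gE sB_scale sA_scale -/A As /k.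
apply: (@eq_trans _ _ (64/81 * c0 ^+ 3)); last by rewrite c03; field.
by field; rewrite gt_eqF.
Unshelve. all: by end_near.
Qed.

End Main.


Section Main2.
Context {R : realType} {n : nat}.
Local Notation V := 'rV[R]_n.

Lemma vf_e (c0 K : R) (x0 : V) (i : 'I_n) (t : R) :
  vf c0 K x0 (x0 + t *: ebasis i) = c0 * (K - `|t| `^ (4/3)).
Proof. by rewrite vf_line subrr add0r enorm_e. Qed.

Lemma vf_x0 (c0 K : R) (x0 : V) : vf c0 K x0 x0 = c0 * K.
Proof.
rewrite /vf subrr.
have -> : enorm (0 : V) = 0.
  by rewrite /enorm big1 ?sqrtr0 // => i _; rewrite mxE expr0n.
by rewrite powR0 ?subr0 //; apply/eqP; lra.
Qed.

Lemma case_x0_grad (O : set V) (phi : V -> R) (x0 : V) (c0 K sg : R) :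
  open O -> O x0 -> C2_on O phi -> sg != 0 ->
  (\forall x \near x0, sg * (phi x0 - vf c0 K x0 x0) <= sg * (phi x - vf c0 K x0 x)) ->
  forall i, partial i phi x0 = 0.
Proof.
move=> oO Ox HC sg0 Hm i.
have Hl : \forall t \near (0:R),
    sg * ((fun t : R => phi (x0 + t *: ebasis i) - vf c0 K x0 (x0 + t *: ebasis i)) 0) <=
    sg * ((fun t : R => phi (x0 + t *: ebasis i) - vf c0 K x0 (x0 + t *: ebasis i)) t).
  by have := near_line (ebasis i) Hm; apply: filterS => t /=; rewrite scale0r addr0.
have Hphi : is_derive (0:R) (1:R) (fun t => phi (x0 + t *: ebasis i)) (partial i phi x0).
  have := @line_is_derive R n phi x0 (ebasis i) 0; rewrite scale0r addr0; apply.
  exact: (HC.2 i).1 x0 Ox.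
have Hv : is_derive (0:R) (1:R) (fun t => vf c0 K x0 (x0 + t *: ebasis i)) (- (c0 * 0)).
  have -> : (fun t => vf c0 K x0 (x0 + t *: ebasis i)) = (fun t => c0 * (K - `|t| `^ (4/3))).
    by apply/funext => t; rewrite vf_e.
  exact: is_derive_aff abs43_derive.
have := first_min_s sg0 (is_deriveB Hphi Hv) Hl.
by rewrite mulr0 oppr0 subr0.
Qed.

Lemma case_x0_super (O : set V) (phi : V -> R) (x0 : V) (c0 K : R) :
  (0 < n)%N -> open O -> O x0 -> C2_on O phi -> 0 < c0 ->
  (\forall x \near x0, phi x - vf c0 K x0 x <= phi x0 - vf c0 K x0 x0) -> False.
Proof.
move=> n0 oO Ox HC c00 Hm.
have Hm' : \forall x \near x0, -1 * (phi x0 - vf c0 K x0 x0) <= -1 * (phi x - vf c0 K x0 x).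
  by apply: filterS Hm => x; rewrite !mulN1r lerN2.
have Hgr := case_x0_grad oO Ox HC (ltac:(by rewrite oppr_eq0 oner_neq0) : (-1 : R) != 0) Hm'.
set i0 : 'I_n := Ordinal n0.
set e : V := ebasis i0.
set M := partial i0 (partial i0 phi) x0.
set K' := (`|M| + 1) / 2.
have K'0 : 0 < K' by rewrite /K'; have := normr_ge0 M; lra.
have Fd1 : \forall t \near (0:R), is_derive t (1:R) (fun t => phi (x0 + t *: e))
    (partial i0 phi (x0 + t *: e)).
  have := near_line e (open_near oO Ox); apply: filterS => t Ot.
  exact: (@line_is_derive R n phi x0 e t ((HC.2 i0).1 _ Ot)).
have Fd2 : is_derive (0:R) (1:R) (fun t => partial i0 phi (x0 + t *: e)) M.
  have := @line_is_derive R n (partial i0 phi) x0 e 0; rewrite scale0r addr0; apply.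
  exact: ((HC.2 i0).2.2 i0).1 x0 Ox.
have Hd : \forall t \near (0:R), is_derive t (1:R)
    (fun t => - phi (x0 + t *: e) - (0 + 0 * t + K' * t ^+ 2))
    (- partial i0 phi (x0 + t *: e) - (0 + 2 * K' * t)).
  by apply: filterS Fd1 => t Ht; exact: (is_deriveB (is_deriveN Ht) (is_derive_quad _ _ _ _)).
have Hd2 : is_derive (0:R) (1:R) (fun t => - partial i0 phi (x0 + t *: e) - (0 + 2 * K' * t))
    (- M - 2 * K').
  exact: (is_deriveB (is_deriveN Fd2) (is_derive_lin 0 (2 * K') 0)).
have Hmin : \forall t \near (0:R),
    (fun t => - phi (x0 + t *: e) - (0 + 0 * t + K' * t ^+ 2)) 0 <=
    (fun t => - phi (x0 + t *: e) - (0 + 0 * t + K' * t ^+ 2)) t.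
  have H1 := near_line e Hm.
  have H2 := abs43_ge K'0 c00.
  near=> t.
  have h1 : phi (x0 + t *: e) - vf c0 K x0 (x0 + t *: e) <= phi x0 - vf c0 K x0 x0.
    by near: t; exact: H1.
  have h2 : K' * t ^+ 2 <= c0 * `|t| `^ (4/3) by near: t; exact: H2.
  move: h1; rewrite vf_e vf_x0 /= scale0r addr0 mul0r expr0n /= mulr0 !add0r.
  move=> h1; lra.
have := second_min Hmin Hd Hd2.
have := ler_norm (- M); rewrite normrN /K'.
lra.
Unshelve. all: by end_near.
Qed.

Lemma visc_vf (O : set V) (x0 : V) (c0 K : R) :
  (0 < n)%N -> open O -> 0 < c0 -> c0 ^+ 3 = 81/64 -> visc_solution O (vf c0 K x0).
Proof.
move=> n0 oO c00 c03; split; first by apply: continuous_subspaceT; exact: vf_cont.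
split.
- move=> phi y Oy HC Hm.
  case: (eqVneq y x0) => [yx|yx].
    rewrite yx in Oy Hm HC *.
    have Hm' : \forall x \near x0, 1 * (phi x0 - vf c0 K x0 x0) <= 1 * (phi x - vf c0 K x0 x).
      by apply: filterS Hm => x; rewrite !mul1r.
    have Hgr := case_x0_grad oO Oy HC (oner_neq0 R) Hm'.
    rewrite /inf_laplacian big1 ?oppr0 // => i _.
    by rewrite big1 // => j _; rewrite Hgr mulr0 mul0r.
  have Hm' : \forall x \near y, 1 * (phi y - vf c0 K x0 y) <= 1 * (phi x - vf c0 K x0 x).
    by apply: filterS Hm => x; rewrite !mul1r.
  have := case_ne oO Oy HC yx (oner_neq0 R) c00 c03 Hm'.
  rewrite mul1r; lra.
- move=> phi y Oy HC Hm.
  case: (eqVneq y x0) => [yx|yx].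
    rewrite yx in Oy Hm HC *.
    by case: (case_x0_super n0 oO Oy HC c00 Hm).
  have Hm' : \forall x \near y, -1 * (phi y - vf c0 K x0 y) <= -1 * (phi x - vf c0 K x0 x).
    by apply: filterS Hm => x; rewrite !mulN1r lerN2.
  have := case_ne oO Oy HC yx (ltac:(by rewrite oppr_eq0 oner_neq0) : (-1 : R) != 0) c00 c03 Hm'.
  rewrite mulN1r; lra.
Qed.

End Main2.

Unset Implicit Arguments.

Lemma c0_facts (R : realType) : 0 < (3 `^ (4 / 3) / 4 : R) /\ (3 `^ (4 / 3) / 4 : R) ^+ 3 = 81/64.
Proof.
split; first by apply: divr_gt0; [apply: powR_gt0 | ]; lra.
rewrite exprMn -powR_mulrn ?powR_ge0 // -powRrM.
have -> : (4 / 3 * 3%:R : R) = 4%:R by field.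
rewrite powR_mulrn; last lra.
by field.
Qed.

Theorem lemma4 (R : realType) (n : nat) (Omega : set 'rV[R]_n) (x0 : 'rV[R]_n) :
  (0 < n)%N ->
  open Omega -> bounded_set Omega -> connected Omega ->
  Omega x0 -> dist_bd Omega x0 = rho Omega ->
  visc_solution Omega
    (fun x => (3 `^ (4 / 3) / 4) *
              (rho Omega `^ (4 / 3) - enorm (x - x0) `^ (4 / 3))).
Proof.
move=> n0 oO _ _ _ _.
have [c00 c03] := c0_facts R.
exact: (@visc_vf R n Omega x0 (3 `^ (4 / 3) / 4) (rho Omega `^ (4 / 3)) n0 oO c00 c03).
Qed.
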